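(* Let $d\in\mathbb{N}$, $c>0$ and $0<a<1$, and let $\{V, V_{i,n}: i,n\in\mathbb{N}_0\}$ be a family of i.i.d., almost surely nonnegative random variables on a probability space with measure $Q$. Then $E_Q[(\log_+V)^d]<\infty$ if and only if $$\sum_{n\in\mathbb{N}_0}a^n\sum_{i=0}^{\lfloor c\,n^{d-1}\rfloor}V_{i,n}<\infty\quad Q\text{-a.s.}$$
   Context: $\log_+x=\max(\log x,0)$; $\lfloor\cdot\rfloor$ is the integer part; the convention $0^0=1$ is used for $n=0$, $d=1$. *)

(* Defs.v *)
From HB Require Import structures.
From mathcomp Require Import all_boot all_order all_algebra.
From mathcomp Require Import all_classical all_reals all_analysis.
Set Implicit Arguments. Unset Strict Implicit. Unset Printing Implicit Defensive.
Import Order.TTheory GRing.Theory Num.Theory.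
Local Open Scope ring_scope.
Local Open Scope classical_set_scope.

(* log_+ x = max(log x, 0); for x <= 0 (log x = -oo or undefined) it is 0. *)
Definition logp {R : realType} (x : R) : R := if x <= 1 then 0 else ln x.

Definition mutually_independent {d : measure_display} {T : measurableType d}
  {R : realType} (Q : probability T R) {I : eqType} (X : I -> T -> R) : Prop :=
  forall (s : seq I) (B : I -> set R), uniq s ->
    (forall j, measurable (B j)) ->
    Q (\bigcap_(j in [set` s]) (X j @^-1` B j)) =
    (\prod_(j <- s) Q (X j @^-1` B j))%E.

Definition identically_distributed {d : measure_display} {T : measurableType d}
  {R : realType} (Q : probability T R) (X Y : T -> R) : Prop :=
  forall B : set R, measurable B -> Q (X @^-1` B) = Q (Y @^-1` B).

Definition fam {T : Type} {R : Type} (V : T -> R) (W : nat -> nat -> T -> R)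
  (j : option (nat * nat)) : T -> R :=
  match j with None => V | Some (i, n) => W i n end.

(* Main.v *)
Require Import Defs.
From HB Require Import structures.
From mathcomp Require Import all_boot all_order all_algebra.
From mathcomp Require Import all_classical all_reals all_analysis.
From mathcomp Require Import zify ring lra.
From mathcomp Require Import measurable_realfun.
Import Order.TTheory GRing.Theory Num.Theory.
Local Open Scope ring_scope.
Local Open Scope classical_set_scope.

Lemma pow_step0 (M j : nat) : ((M.+1) ^ j.+1 <= M ^ j.+1 + j.+1 * (M.+1) ^ j)%N.
Proof.
elim: j => [|j IH]; first by rewrite !expn1 expn0; lia.
rewrite (expnS M.+1 j.+1) (expnS M j.+1).
have h3 : (M * M.+1 ^ j <= M.+1 ^ j.+1)%N by rewrite expnS leq_mul2r leqnSn orbT.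
have h2 : (M * M.+1 ^ j.+1 <= M * (M ^ j.+1 + j.+1 * M.+1 ^ j))%N by rewrite leq_mul2l IH orbT.
nia.
Qed.

Lemma pow_step (M k : nat) : ((M.+1) ^ k <= M ^ k + k * (M.+1) ^ k.-1)%N.
Proof. by case: k => [|k]; [rewrite !expn0|exact: pow_step0]. Qed.

Lemma powsum_ge (d M : nat) : (1 <= d)%N -> (M ^ d <= d * \sum_(0 <= k < M.+1) k ^ d.-1)%N.
Proof.
move=> d1; elim: M => [|M IH]; first by rewrite exp0n.
rewrite big_nat_recr //= mulnDr.
have := pow_step M d; lia.
Qed.

Lemma powsum_ge' (d Y : nat) : (1 <= d)%N -> ((Y.-1) ^ d <= d * \sum_(0 <= k < Y) k ^ d.-1)%N.
Proof.
move=> d1; case: Y => [|Y]; first by rewrite exp0n.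
exact: powsum_ge.
Qed.

Section reals.
Variable R : realType.

Lemma pow_le1D (y : R) k d : 0 <= y -> (k <= d)%N -> y ^+ k <= 1 + y ^+ d.
Proof.
move=> y0 kd; have [y1|y1] := lerP y 1.
  by rewrite (le_trans (exprn_ile1 _ y0 y1))// lerDl exprn_ge0.
apply: (le_trans (y := y ^+ d)); last by rewrite lerDr.
by rewrite ler_eXn2l// ltW.
Qed.

Lemma pow_shift2 (y u : R) d : 0 <= y -> 0 <= u -> y <= u + 2 ->
  y ^+ d <= 2 ^+ d * u ^+ d + 4 ^+ d.
Proof.
move=> y0 u0 yu; have [u2|u2] := lerP 2 u.
  apply: (le_trans (y := (2 * u) ^+ d)); last by rewrite exprMn lerDl exprn_ge0.
  rewrite lerXn2r// ?nnegrE ?mulr_ge0//; lra.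
apply: (le_trans (y := 4 ^+ d)); last by rewrite lerDr mulr_ge0 ?exprn_ge0.
rewrite lerXn2r// ?nnegrE//; lra.
Qed.

Lemma pow_expR (g : R) k : 0 < g -> forall n : nat,
  n%:R ^+ k <= (k`!%:R / g ^+ k) * expR (n%:R * g).
Proof.
move=> g0 n; case: k => [|k].
  rewrite !expr0 fact0 divr1 mul1r -expR0 ler_expR.
  by rewrite mulr_ge0// ltW.
have := expR_ge1Dxn k (mulr_ge0 (ler0n _ n) (ltW g0)).
rewrite exprMn => h.
have : n%:R ^+ k.+1 * g ^+ k.+1 / k.+1`!%:R <= expR (n%:R * g).
  by rewrite (le_trans _ h)// lerDr.
rewrite ler_pdivrMr ?ltr0n ?fact_gt0// => h2.
rewrite mulrAC ler_pdivlMr ?exprn_gt0//.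
by rewrite [X in _ <= X]mulrC.
Qed.
End reals.


Section pointwise.
Variables (R : realType) (c b : R) (d : nat).
Hypotheses (c0 : 0 < c) (b0 : 0 < b) (d1 : (1 <= d)%N).

Definition mm (n : nat) : nat := (Num.truncn (c * n%:R ^+ (d - 1))).+1.

Lemma mm_gt n : c * n%:R ^+ (d - 1) < (mm n)%:R.
Proof. exact: truncnS_gt. Qed.

Lemma mm_le n : (mm n)%:R <= c * n%:R ^+ (d - 1) + 1.
Proof. by rewrite /mm -addn1 natrD lerD2r truncn_le mulr_ge0// ltW. Qed.

Lemma logp_ge0 (v : R) : 0 <= logp v.
Proof. by rewrite /logp; case: ifPn => //; rewrite -ltNge => /ln_gt0/ltW. Qed.

Lemma ind_iff (v : R) n : (expR (n%:R * b) < v) = (n%:R * b < logp v).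
Proof.
rewrite /logp; case: ifPn => v1.
  apply/idP/idP => h.
    have : 1 <= expR (n%:R * b) by rewrite -expR0 ler_expR mulr_ge0// ltW.
    lra.
  have : 0 <= n%:R * b by rewrite mulr_ge0// ltW.
  lra.
rewrite -ltNge in v1.
by rewrite -{1}(@lnK _ v) ?ltr_expR// posrE (lt_trans _ v1).
Qed.

Definition Sser (v : R) : \bar R :=
  (\sum_(0 <= n <oo) ((mm n)%:R * (expR (n%:R * b) < v)%R%:R)%R%:E)%E.

Definition cA := (2 * c + 1) / b ^+ d.
Definition cB := c + 2.
Definition cC := b ^+ d * 2 ^+ d * d%:R / c.
Definition cD := b ^+ d * 4 ^+ d.

Lemma Sser_bounds (v : R) : exists s, Sser v = s%:E /\
  s <= cA * logp v ^+ d + cB /\ logp v ^+ d <= cC * s + cD.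
Proof.
set x := logp v; have x0 : 0 <= x by exact: logp_ge0.
set y := x / b; have y0 : 0 <= y by rewrite divr_ge0// ltW.
set Y := Num.truncn y.
have indlt n : (n < Y)%N -> (expR (n%:R * b) < v).
  rewrite ind_iff -/x truncn_gt_nat => h.
  rewrite -ltr_pdivlMr// -/y; apply: lt_le_trans h; rewrite ltr_nat //.
have indge n : (Y.+1 <= n)%N -> ~~ (expR (n%:R * b) < v).
  rewrite ind_iff -/x -leNgt => h.
  rewrite -ler_pdivrMr// -/y; apply/ltW/(lt_le_trans (truncnS_gt y)).
  by rewrite ler_nat.
pose f := fun n => ((mm n)%:R * (expR (n%:R * b) < v)%R%:R : R).
exists (\sum_(0 <= n < Y.+1) f n); split.
  rewrite /Sser (@nneseries_split _ _ 0 Y.+1); last first.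
    by move=> k _; rewrite lee_fin mulr_ge0.
  rewrite add0n [X in (_ + X)%E]eseries0 ?adde0 ?sumEFin//.
  by move=> k Yk _; rewrite (negbTE (indge k Yk)) mulr0.
have yY : (Y%:R : R) <= y by rewrite truncn_le.
have fle : \sum_(0 <= n < Y.+1) f n <= \sum_(0 <= n < Y.+1) (c * y ^+ (d - 1) + 1).
  apply: ler_sum_nat => n /andP[_ hn]; rewrite /f.
  apply: (le_trans (y := (mm n)%:R)).
    by rewrite ler_piMr// lern1 leq_b1.
  apply: (le_trans (mm_le n)); rewrite lerD2r ler_pM2l// lerXn2r// ?nnegrE//.
  by apply: le_trans yY; rewrite ler_nat -ltnS.
have yd : y ^+ d = y ^+ (d - 1) * y by rewrite -exprSr subn1 prednK.
have h1 := @pow_le1D R y (d - 1) d y0 (leq_subr 1 d).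
have h2 := @pow_le1D R y 1 d y0 d1; rewrite expr1 in h2.
have hyx : y ^+ d = x ^+ d / b ^+ d by rewrite /y exprMn exprVn.
have s_ub : \sum_(0 <= n < Y.+1) f n <= cA * x ^+ d + cB.
  apply: (le_trans fle); rewrite sumr_const_nat subn0 -mulr_natl.
  apply: (le_trans (y := (y + 1) * (c * y ^+ (d - 1) + 1))).
    apply: ler_wpM2r.
      by apply: addr_ge0 => //; apply: mulr_ge0; [exact: ltW | exact: exprn_ge0].
    by rewrite -addn1 natrD lerD2r.
  rewrite /cA /cB mulrAC -mulrA -hyx.
  have : c * y ^+ (d - 1) <= c * (1 + y ^+ d) by rewrite ler_pM2l.
  set P := y ^+ (d - 1) in yd h1 *; set Q := y ^+ d in yd h1 h2 *.
  have -> : (y + 1) * (c * P + 1) = c * (P * y) + c * P + y + 1 by ring.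
  rewrite -yd; lra.
split => //.
have s_lb : c * ((\sum_(0 <= n < Y) n ^ (d - 1))%N)%:R <= \sum_(0 <= n < Y.+1) f n.
  rewrite big_nat_recr//= natr_sum mulr_sumr.
  apply: (le_trans (y := \sum_(0 <= i < Y) f i)); last first.
    by rewrite lerDl /f mulr_ge0.
  apply: ler_sum_nat => n /andP[_ hn]; rewrite /f indlt// mulr1 natrX.
  exact/ltW/mm_gt.
have hu := powsum_ge' d Y d1; rewrite subn1 in s_lb.
set u := (Y.-1)%:R : R.
have yu : y <= u + 2.
  apply/ltW/(lt_le_trans (truncnS_gt y)); rewrite /u -[2]/(2%:R) -natrD ler_nat.
  by rewrite addn2 ltnS leqSpred.
have := @pow_shift2 R y u d y0 (ler0n _ _) yu.
have hud : u ^+ d <= d%:R * ((\sum_(0 <= n < Y) n ^ d.-1)%N)%:R.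
  by rewrite /u -natrX -natrM ler_nat.
have hx : x ^+ d = b ^+ d * y ^+ d by rewrite hyx mulrC divfK// expf_neq0// gt_eqF.
rewrite hx /cC /cD => hy.
set Sg := ((\sum_(0 <= n < Y) n ^ d.-1)%N)%:R : R in s_lb hud.
set s := \sum_(0 <= n < Y.+1) f n in s_lb *.
have hSg : Sg <= s / c by rewrite ler_pdivlMr// mulrC.
have bd0 : 0 < b ^+ d by rewrite exprn_gt0.
have -> : b ^+ d * 2 ^+ d * d%:R / c * s + b ^+ d * 4 ^+ d
   = b ^+ d * (2 ^+ d * (d%:R * (s / c)) + 4 ^+ d) by rewrite mulrDr; congr (_ + _); rewrite !mulrA mulrAC.
rewrite ler_pM2l//; apply: (le_trans hy); rewrite lerD2r ler_pM2l ?exprn_gt0//.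
apply: (le_trans hud); rewrite ler_pM2l ?ltr0n//.
Qed.
End pointwise.
Arguments mm {R}. Arguments Sser {R}. Arguments cA {R}. Arguments cB {R}.
Arguments cC {R}. Arguments cD {R}.


Lemma logp_max {R : realType} (v : R) : logp v = Order.max (ln v) 0.
Proof.
rewrite /logp; case: ifPn => h; first by rewrite max_r// ln_le0.
by rewrite max_l// ltW// ln_gt0// ltNge.
Qed.

Lemma measurable_logp {R : realType} : measurable_fun setT (@logp R).
Proof.
rewrite (_ : logp = (@ln R) \max (cst 0)); last by apply/funext => v; rewrite logp_max.
exact: measurable_realfun.measurable_maxr (@measurable_realfun.measurable_ln R) (measurable_cst _).
Qed.

Section integrals.
Variables (dsp : measure_display) (T : measurableType dsp) (R : realType).
Variables (Q : probability T R) (V : T -> R) (c b : R) (d : nat).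
Hypotheses (mV : measurable_fun setT V) (c0 : 0 < c) (b0 : 0 < b) (d1 : (1 <= d)%N).

Definition Aev (n : nat) := V @^-1` `]expR (n%:R * b), +oo[.

Lemma mAev n : measurable (Aev n).
Proof. by rewrite -[Aev n]setTI; apply: mV => //; exact: measurable_itv. Qed.

Let f n x : \bar R := ((mm c d n)%:R * \1_(Aev n) x : R)%:E.

Let mf n : measurable_fun setT (f n).
Proof.
apply/measurable_EFinP; apply: measurable_funM; first exact: measurable_cst.
exact: measurable_indic (mAev n).
Qed.

Let f0 n x : (0 <= f n x)%E.
Proof. by rewrite lee_fin mulr_ge0. Qed.

Let SV x : Sser c b d (V x) = (\sum_(0 <= n <oo) f n x)%E.
Proof.
rewrite /Sser /f; apply: congr_lim; apply/funext => N; apply: eq_bigr => n _.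
rewrite indicE; congr (_ * (nat_of_bool _)%:R)%:E.
case: (boolP (expR (n%:R * b) < V x)) => h.
  by rewrite mem_set// /Aev /preimage /= in_itv /= h.
apply/esym/negbTE/negP => /set_mem; rewrite /Aev /preimage /= in_itv /= andbT.
by apply/negP.
Qed.

Lemma measurable_SV : measurable_fun setT (fun x => Sser c b d (V x)).
Proof.
rewrite (_ : (fun x => _) = fun x => (\sum_(0 <= n <oo) f n x)%E); last exact/funext.
exact: (ge0_emeasurable_sum (P := xpredT)).
Qed.

Lemma Ieq : (\int[Q]_x Sser c b d (V x) = \sum_(0 <= n <oo) ((mm c d n)%:R%:E * Q (Aev n)))%E.
Proof.
under eq_integral do rewrite SV.
rewrite integral_nneseries//; apply: congr_lim; apply/funext => N; apply: eq_bigr => n _.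
rewrite /f; under eq_integral do rewrite EFinM.
rewrite ge0_integralZl_EFin//.
- by rewrite integral_indic ?setIT//; exact: mAev.
- exact/measurable_EFinP/measurable_indic/mAev.
Qed.

Lemma Sser_ge0 v : (0 <= Sser c b d v)%E.
Proof. by apply: nneseries_ge0 => n _ _; rewrite lee_fin mulr_ge0. Qed.

Lemma mLd : measurable_fun setT (fun x => (logp (V x) ^+ d)%:E).
Proof.
apply/measurable_EFinP; apply: (measurableT_comp (exprn_measurable _)).
exact: measurableT_comp measurable_logp mV.
Qed.

Let cA0 : 0 <= cA c b d. Proof. apply: divr_ge0; [have := c0; lra | exact/exprn_ge0/ltW]. Qed.
Let cB0 : 0 <= cB c. Proof. rewrite /cB; have := c0; lra. Qed.
Let cC0 : 0 <= cC c b d. Proof. by apply: divr_ge0; [apply: mulr_ge0; [apply: mulr_ge0; apply/exprn_ge0 => //; exact/ltW | ] | exact/ltW]. Qed.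
Let cD0 : 0 <= cD b d. Proof. by apply: mulr_ge0; apply/exprn_ge0 => //; exact/ltW. Qed.

Lemma A1 : (\int[Q]_x ((logp (V x)) ^+ d)%:E < +oo)%E ->
  (\sum_(0 <= n <oo) ((mm c d n)%:R%:E * Q (Aev n)) < +oo)%E.
Proof.
move=> hI; rewrite -Ieq.
apply: (@le_lt_trans _ _ (\int[Q]_x ((cA c b d)%:E * (logp (V x) ^+ d)%:E + (cB c)%:E))%E).
  apply: ge0_le_integral => //.
  - by move=> x _; exact: Sser_ge0.
  - exact: measurable_SV.
  - by apply: emeasurable_funD; [exact: measurable_funeM mLd | exact: measurable_cst].
  move=> x _; have [s [-> [h1 _]]] := @Sser_bounds R c b d c0 b0 d1 (V x).
  by rewrite -EFinM -EFinD lee_fin.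
rewrite ge0_integralD//.
- rewrite ge0_integralZl_EFin//; last exact: mLd.
  rewrite integral_cst//.
  apply: lte_add_pinfty; first by apply: lte_mul_pinfty.
  apply: lte_mul_pinfty => //.
  by apply: (le_lt_trans (probability_le1 _ _)) => //; exact: ltry.
all: first [ by move=> x _; rewrite lee_fin exprn_ge0// logp_ge0
  | by move=> x _; apply: mule_ge0; rewrite lee_fin// exprn_ge0// logp_ge0
  | exact: measurable_funeM mLd ].
Qed.

Lemma A2 : (\sum_(0 <= n <oo) ((mm c d n)%:R%:E * Q (Aev n)) < +oo)%E ->
  (\int[Q]_x ((logp (V x)) ^+ d)%:E < +oo)%E.
Proof.
rewrite -Ieq => hS.
apply: (@le_lt_trans _ _ (\int[Q]_x ((cC c b d)%:E * Sser c b d (V x) + (cD b d)%:E))%E).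
  apply: ge0_le_integral => //.
  - by move=> x _; rewrite lee_fin exprn_ge0// logp_ge0.
  - exact: mLd.
  - by apply: emeasurable_funD; [exact: measurable_funeM measurable_SV | exact: measurable_cst].
  move=> x _; have [s [-> [_ h2]]] := @Sser_bounds R c b d c0 b0 d1 (V x).
  by rewrite -EFinM -EFinD lee_fin.
rewrite ge0_integralD//.
- rewrite ge0_integralZl_EFin//; last exact: measurable_SV.
  rewrite integral_cst//.
  apply: lte_add_pinfty; first by apply: lte_mul_pinfty.
  apply: lte_mul_pinfty => //.
  by apply: (le_lt_trans (probability_le1 _ _)) => //; exact: ltry.
all: first [ by move=> x _; exact: Sser_ge0
  | by move=> x _; apply: mule_ge0; [rewrite lee_fin | exact: Sser_ge0]
  | exact: measurable_funeM measurable_SV ].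
Qed.
End integrals.


Section series_lemmas.
Variable R : realType.

Lemma geom_bound (u : nat -> R) (B q : R) : (forall n, 0 <= u n) ->
  0 < q -> q < 1 -> 0 <= B -> (forall n, u n <= B * q ^+ n) ->
  (\sum_(0 <= n <oo) (u n)%:E < +oo)%E.
Proof.
move=> u0 q0 q1 B0 uB.
apply: (@le_lt_trans _ _ (B * (1 - q)^-1)%:E); last exact: ltry.
apply: lime_le; first by apply: is_cvg_nneseries => n _ _; rewrite lee_fin.
apply: nearW => N; rewrite sumEFin lee_fin.
apply: le_trans (geometric_le_lim N B0 q0 _); last by rewrite ger0_norm// ltW.
by rewrite /series /=; apply: ler_sum => n _.
Qed.

Lemma eventually_bound (u : nat -> R) (q K : R) (N : nat) : 0 < q -> 0 <= K ->
  (forall n, 0 <= u n) -> (forall n, (N <= n)%N -> u n <= K * q ^+ n) ->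
  exists B, 0 <= B /\ forall n, u n <= B * q ^+ n.
Proof.
move=> q0 K0 u0 uK.
pose B := K + \sum_(k < N) u k / q ^+ k.
have S0 : 0 <= \sum_(k < N) u k / q ^+ k.
  by apply: sumr_ge0 => k _; rewrite divr_ge0// exprn_ge0// ltW.
exists B; split; first by rewrite addr_ge0.
move=> n; have [nN|Nn] := ltnP n N; last first.
  apply: (le_trans (uK n Nn)); rewrite ler_pM2r ?exprn_gt0// lerDl//.
rewrite -ler_pdivrMr ?exprn_gt0//.
apply: (le_trans (y := \sum_(k < N) u k / q ^+ k)); last by rewrite lerDr.
rewrite (bigD1 (Ordinal nN))//= lerDl sumr_ge0// => k _.
by rewrite divr_ge0// exprn_ge0// ltW.
Qed.

Lemma series_not_fin (u : nat -> R) : (forall n, 0 <= u n) ->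
  (forall N, exists2 n, (N <= n)%N & 1 <= u n) ->
  ~ (\sum_(0 <= n <oo) (u n)%:E < +oo)%E.
Proof.
move=> u0 inf.
have part k : exists M, k%:R <= \sum_(0 <= n < M) u n.
  elim: k => [|k [M hM]]; first by exists 0%N; rewrite big_geq.
  have [n Mn un] := inf M.
  exists n.+1; rewrite (big_cat_nat (n := M)) ?(leqW Mn)// big_nat_recr//= -natr1.
  have : 0 <= \sum_(M <= i < n) u i by apply: sumr_ge0 => i _; exact: u0.
  move: hM un; set s1 := \sum_(0 <= i < M) _; set s2 := \sum_(M <= i < n) _; lra.
have s0 : (0 <= \sum_(0 <= n <oo) (u n)%:E)%E.
  by apply: nneseries_ge0 => n _ _; rewrite lee_fin.
move=> hs.
have := part (Num.truncn (fine (\sum_(0 <= n <oo) (u n)%:E))).+1.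
move=> [M hM].
have : ((\sum_(0 <= n < M) u n)%:E <= \sum_(0 <= n <oo) (u n)%:E)%E.
  by rewrite -sumEFin; apply: nneseries_lim_ge => n _ _; rewrite lee_fin.
rewrite -(@fineK _ (\sum_(0 <= n <oo) (u n)%:E)); last first.
  by rewrite ge0_fin_numE.
rewrite lee_fin => h.
have := truncnS_gt (fine (\sum_(0 <= n <oo) (u n)%:E)).
move: hM h; set s := fine _; set t := \sum_(0 <= n < M) u n; lra.
Qed.
End series_lemmas.


Lemma Qfin {dsp : measure_display} {T : measurableType dsp} {R : realType}
  (Q : probability T R) (A : set T) : measurable A -> Q A = (fine (Q A))%:E.
Proof.
move=> mA; rewrite fineK// ge0_fin_numE ?measure_ge0//.
by apply: (le_lt_trans (probability_le1 _ mA)); exact: ltry.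
Qed.

Section forward.
Variables (dsp : measure_display) (T : measurableType dsp) (R : realType).
Variables (Q : probability T R) (d : nat) (c a : R) (V : T -> R) (W : nat -> nat -> T -> R).
Hypotheses (d1 : (1 <= d)%N) (c0 : 0 < c) (a0 : 0 < a) (a1 : a < 1).
Hypotheses (mV : measurable_fun setT V) (mW : forall i n, measurable_fun setT (W i n)).
Hypothesis idd : forall i n, identically_distributed Q (W i n) V.

Definition bb := - ln a.
Lemma bb0 : 0 < bb.
Proof. by rewrite /bb oppr_gt0 ln_lt0// a0 a1. Qed.

Lemma an (n : nat) : a ^+ n = expR (- (n%:R * bb)).
Proof.
by rewrite -mulrN expRM_natl /bb opprK lnK// posrE.
Qed.

Let be := bb / 2.
Let be0 : 0 < be. Proof. by rewrite divr_gt0// bb0. Qed.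

Lemma forward_pt x : (forall i n, 0 <= W i n x) ->
  (exists N, forall n, (N <= n)%N -> forall i, (i < mm c d n)%N -> W i n x <= expR (n%:R * be)) ->
  (\sum_(0 <= n <oo) (a ^+ n * \sum_(0 <= i < mm c d n) W i n x)%:E < +oo)%E.
Proof.
move=> W0 [N hN].
set u := fun n => a ^+ n * \sum_(0 <= i < mm c d n) W i n x.
have u0 n : 0 <= u n by apply: mulr_ge0; [exact/exprn_ge0/ltW | apply: sumr_ge0 => i _].
set g := be / 2; have g0 : 0 < g by rewrite divr_gt0.
set K := ((d - 1)`!%:R / g ^+ (d - 1)) : R.
have K0 : 0 <= K by rewrite divr_ge0// exprn_ge0// ltW.
have hK := @pow_expR R g (d - 1) g0.
set q := expR (- g).
have q0 : 0 < q by exact: expR_gt0.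
have q1 : q < 1 by rewrite expR_lt1 oppr_lt0.
have [B [B0 hB]] : exists B, 0 <= B /\ forall n, u n <= B * q ^+ n.
  apply: (@eventually_bound R u q (c * K + 1) N) => // [|n Nn].
    by rewrite addr_ge0// mulr_ge0// ltW.
  have e1 : 1 <= expR (n%:R * g) by rewrite -expR0 ler_expR mulr_ge0// ltW.
  have hs : \sum_(0 <= i < mm c d n) W i n x <= (mm c d n)%:R * expR (n%:R * be).
    apply: (le_trans (y := \sum_(0 <= i < mm c d n) expR (n%:R * be))).
      by apply: ler_sum_nat => i /andP[_ hi]; exact: hN n Nn i hi.
    by rewrite sumr_const_nat subn0 [in X in _ <= X]mulr_natl.
  have hm : (mm c d n)%:R <= (c * K + 1) * expR (n%:R * g).
    apply: (le_trans (@mm_le R c d c0 n)); rewrite mulrDl mul1r -mulrA.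
    by rewrite lerD// ler_pM2l.
  rewrite /u; apply: (le_trans (y := a ^+ n * ((c * K + 1) * expR (n%:R * g) * expR (n%:R * be)))).
    rewrite ler_pM2l ?exprn_gt0//; apply: (le_trans hs).
    by rewrite ler_pM2r ?expR_gt0.
  have -> : a ^+ n * ((c * K + 1) * expR (n%:R * g) * expR (n%:R * be))
      = (c * K + 1) * expR (n%:R * - g).
    rewrite an -mulrA mulrCA -!expRD; congr (_ * expR _); rewrite /g /be; field.
    by [].
  by rewrite expRM_natl.
exact: (@geom_bound R u B q u0 q0 q1 B0 hB).
Qed.


Let I n := `]expR (n%:R * be), +oo[%classic : set R.
Let F' n k := W k n @^-1` I n.
Let F n := \big[setU/set0]_(k < mm c d n) F' n k.

Let mF' n k : measurable (F' n k).
Proof. by rewrite /F' -[_ @^-1` _]setTI; apply: mW => //; exact: measurable_itv. Qed.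

Let mF n : measurable (F n).
Proof. by apply: bigsetU_measurable => k _; exact: mF'. Qed.

Let QF n : (Q (F n) <= (mm c d n)%:R%:E * Q (@Aev _ _ _ V be n))%E.
Proof.
apply: (le_trans (@content_subadditive _ _ _ Q (F n) (F' n) (mm c d n) _ (mF n) (@subset_refl _ _))).
  by move=> k _; exact: mF'.
set p := fine (Q (@Aev _ _ _ V be n)).
have -> : (\sum_(k < mm c d n) Q (F' n k) = \sum_(k < mm c d n) p%:E)%E.
  apply: eq_bigr => k _; rewrite /p -Qfin; last exact: (@mAev _ _ _ V be mV n).
  exact: (idd k n _ (measurable_itv _)).
have -> : Q (@Aev _ _ _ V be n) = p%:E by rewrite /p -Qfin //; exact: (@mAev _ _ _ V be mV n).
by rewrite sumEFin sumr_const card_ord -EFinM mulr_natl.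
Qed.

Lemma forward (hI : (\int[Q]_x ((logp (V x)) ^+ d)%:E < +oo)%E)
  (hV : forall i n, {ae Q, forall x, 0 <= W i n x}) :
  {ae Q, forall x, (\sum_(0 <= n <oo)
        (a ^+ n * \sum_(0 <= i < mm c d n) W i n x)%:E < +oo)%E}.
Proof.
have S := @A1 dsp T R Q V c be d mV c0 be0 d1 hI.
have SF : (\sum_(0 <= n <oo) Q (F n) < +oo)%E.
  apply: le_lt_trans S; apply: lee_nneseries.
    by move=> n _ _; exact: measure_ge0.
  by move=> n _; exact: QF.
have BC := @lim_sup_set_cvg0 _ _ _ Q F mF SF.
have hnn : {ae Q, forall x, forall i n, 0 <= W i n x}.
  apply: ae_foralln => i; apply: ae_foralln => n; exact: hV.
have hL : {ae Q, forall x, ~ lim_sup_set F x}.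
  exists (lim_sup_set F); split => //.
    by apply: bigcap_measurableType => k _; apply: bigcup_measurable => j _.
  by move=> x /= /contrapT.
apply: filterS2 hnn hL => x W0 nL; apply: forward_pt => //.
have [N hN] : exists N, ~ (\bigcup_(j in [set j | (N <= j)%N]) F j) x.
  apply/existsNP => H; apply: nL => N _; exact: H.
exists N => n Nn i hi; rewrite leNgt; apply/negP => Wgt.
apply: hN; exists n => //; rewrite /F -bigcup_mkord; exists i => //.
by rewrite /F' /I /preimage /= in_itv /= andbT.
Qed.
End forward.


Lemma le_sum_term {R : realType} (F : nat -> R) m i : (forall k, 0 <= F k) ->
  (i < m)%N -> F i <= \sum_(0 <= k < m) F k.
Proof.
move=> F0 im; rewrite big_mkord (bigD1 (Ordinal im))//= lerDl.
by apply: sumr_ge0 => k _; exact: F0.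
Qed.

Lemma psum_mono {R : realType} (F : nat -> R) M M' : (forall k, 0 <= F k) ->
  (M <= M')%N -> \sum_(0 <= k < M) F k <= \sum_(0 <= k < M') F k.
Proof.
move=> F0 MM; rewrite [leRHS](big_cat_nat (n := M))// lerDl.
by apply: sumr_ge0 => k _; exact: F0.
Qed.

Section backward.
Variables (dsp : measure_display) (T : measurableType dsp) (R : realType).
Variables (Q : probability T R) (d : nat) (c a : R) (V : T -> R) (W : nat -> nat -> T -> R).
Hypotheses (d1 : (1 <= d)%N) (c0 : 0 < c) (a0 : 0 < a) (a1 : a < 1).
Hypotheses (mV : measurable_fun setT V) (mW : forall i n, measurable_fun setT (W i n)).
Hypothesis idd : forall i n, identically_distributed Q (W i n) V.
Hypothesis hind : mutually_independent Q (fam V W).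

Let t n := expR (n%:R * @bb R a).

Let at1 n : a ^+ n * t n = 1.
Proof. by rewrite (@an R a a0) /t -expRD addNr expR0. Qed.

Lemma backward_pt x : (forall i n, 0 <= W i n x) ->
  (\sum_(0 <= n <oo) (a ^+ n * \sum_(0 <= i < mm c d n) W i n x)%:E < +oo)%E ->
  exists N, forall n, (N <= n)%N -> forall i, (i < mm c d n)%N -> W i n x <= t n.
Proof.
move=> W0 hs; apply: contrapT => H.
apply: (@series_not_fin R (fun n => a ^+ n * \sum_(0 <= i < mm c d n) W i n x) _ _ hs).
  by move=> n; apply: mulr_ge0; [exact/exprn_ge0/ltW | apply: sumr_ge0 => i _].
move=> N; move/forallNP: H => /(_ N) /existsNP [n /not_implyP [Nn]].
move=> /existsNP [i /not_implyP [im]] /negP; rewrite -ltNge => Wt.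
exists n => //; rewrite -(at1 n) ler_pM2l ?exprn_gt0//.
exact/ltW/(lt_le_trans Wt)/le_sum_term.
Qed.

Let G N := \bigcap_(n in [set n | (N <= n)%N])
  \bigcap_(i in [set i | (i < mm c d n)%N]) (W i n @^-1` `]-oo, t n]).

Let mG N : measurable (G N).
Proof.
apply: bigcap_measurableType => n _; apply: bigcap_measurableType => i _.
by rewrite -[_ @^-1` _]setTI; apply: mW => //; exact: measurable_itv.
Qed.

Let pr n := fine (Q (@Aev _ _ _ V (@bb R a) n)).
Let mA n : measurable (@Aev _ _ _ V (@bb R a) n).
Proof. exact: (@mAev _ _ _ V _ mV n). Qed.
Let QA n : Q (@Aev _ _ _ V (@bb R a) n) = (pr n)%:E.
Proof. by rewrite /pr -Qfin //. Qed.
Let pr0 n : 0 <= pr n.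
Proof. by rewrite /pr fine_ge0// measure_ge0. Qed.
Let pr1 n : pr n <= 1.
Proof. by rewrite -lee_fin -QA probability_le1. Qed.

Let s M N0 := [seq Some (i, n) | n <- index_iota N0 M, i <- index_iota 0 (mm c d n)].
Let B (j : option (nat * nat)) : set R :=
  match j with None => setT | Some (i, n) => `]-oo, t n] end.

Let QWle i n : Q (W i n @^-1` `]-oo, t n]) = (1 - pr n)%:E.
Proof.
have -> : W i n @^-1` `]-oo, t n] = ~` (W i n @^-1` `]t n, +oo[).
  apply/seteqP; split => x /=; rewrite !in_itv /= ?andbT.
    by move=> h; apply/negP; rewrite -leNgt.
  by move/negP; rewrite -leNgt.
rewrite probability_setC; last first.
  by rewrite -[_ @^-1` _]setTI; apply: mW => //; exact: measurable_itv.
rewrite (idd _ _ _ (measurable_itv _)).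
by rewrite EFinB -QA.
Qed.

Lemma prod_bound N0 M : (Q (G N0) <= (\prod_(N0 <= n < M) (1 - pr n) ^+ mm c d n)%:E)%E.
Proof.
have mB j : measurable (B j) by case: j => [[i n]|] //=; exact: measurable_itv.
have mP j : measurable (fam V W j @^-1` B j).
  by rewrite -[_ @^-1` _]setTI; case: j => [[i n]|] /=; [apply: mW | apply: mV].
have sub : G N0 `<=` \bigcap_(j in [set` s M N0]) (fam V W j @^-1` B j).
  move=> x Gx j /= /allpairsPdep [n [i [hn hi ->]]] /=.
  rewrite mem_index_iota in hn; rewrite mem_index_iota in hi.
  by apply: Gx; [case/andP: hn | case/andP: hi].
apply: (le_trans (le_measure _ _ _ sub)).
- by rewrite inE; exact: mG.
- by rewrite inE bigcap_seq; apply: bigsetI_measurable => j _.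
have us : uniq (s M N0).
  apply: allpairs_uniq_dep => //; first exact: iota_uniq.
    by move=> n _; exact: iota_uniq.
  by move=> [n1 i1] [n2 i2] _ _ /= [-> ->].
change (Q (\bigcap_(j in [set` s M N0]) fam V W j @^-1` B j) <= (\prod_(N0 <= n < M) (1 - pr n) ^+ mm c d n)%:E)%E.
rewrite (hind _ _ us mB).
pose g (j : option (nat * nat)) : R := if j is Some (i, n) then 1 - pr n else 1.
have -> : (\prod_(j <- s M N0) Q (fam V W j @^-1` B j) = \prod_(j <- s M N0) (g j)%:E)%E.
  apply: eq_bigr => -[[i n]|] _ /=; first exact: QWle.
  by rewrite preimage_setT; exact: probability_setT.
rewrite prodEFin lee_fin /s big_allpairs_dep /=.
rewrite le_eqVlt; apply/orP; left; apply/eqP/eq_bigr => n _.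
by rewrite prodr_const_nat subn0.
Qed.


Lemma backward (hV : forall i n, {ae Q, forall x, 0 <= W i n x})
  (hS : {ae Q, forall x, (\sum_(0 <= n <oo)
        (a ^+ n * \sum_(0 <= i < mm c d n) W i n x)%:E < +oo)%E}) :
  (\int[Q]_x ((logp (V x)) ^+ d)%:E < +oo)%E.
Proof.
have hnn : {ae Q, forall x, forall i n, 0 <= W i n x}.
  apply: ae_foralln => i; apply: ae_foralln => n; exact: hV.
have hG : {ae Q, forall x, exists N, G N x}.
  apply: filterS2 hnn hS => x W0 hs.
  have [N hN] := backward_pt x W0 hs.
  exists N => n /= Nn i /= im; rewrite /preimage /= in_itv /=; exact: hN.
have [N0 QG] : exists N0, (0 < Q (G N0))%E.
  apply: contrapT => H.
  have H0 N : Q (G N) = 0.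
    apply/eqP; rewrite eq_le measure_ge0 andbT leNgt; apply/negP => h.
    by apply: H; exists N.
  have hn : {ae Q, forall x, forall N, ~ G N x}.
    apply: ae_foralln => N; exists (G N); split; [exact: mG | exact: H0 |].
    by move=> x /= /contrapT.
  have [A [mA1 A0 sA]] : {ae Q, forall x, False}.
    by apply: filterS2 hG hn => x [N GN] nG; exact: nG N GN.
  have : (Q setT <= Q A)%E.
    by apply: le_measure; rewrite ?inE// => x _; exact: sA.
  by rewrite A0 probability_setT lee_fin ler10.
set de := fine (Q (G N0)).
have QGE : Q (G N0) = de%:E by rewrite /de -Qfin//; exact: mG.
have de0 : 0 < de by rewrite -lte_fin -QGE.
have hb M : \sum_(N0 <= n < M) (mm c d n)%:R * pr n <= - ln de.
  have := prod_bound N0 M; rewrite QGE lee_fin => h.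
  have h2 : de <= expR (- \sum_(N0 <= n < M) (mm c d n)%:R * pr n).
    apply: (le_trans h).
    rewrite -sumrN expR_sum; apply: ler_prod => n _.
    rewrite exprn_ge0 ?subr_ge0//= -mulrN expRM_natl lerXn2r ?nnegrE ?subr_ge0 ?expR_ge0//.
    by have := expR_ge1Dx (- pr n); rewrite addrC.
  move: h2; rewrite -[X in X <= _](@lnK _ de) ?posrE// ler_expR; lra.
set K := \sum_(0 <= n < N0) (mm c d n)%:R + - ln de.
apply: (@A2 dsp T R Q V c (@bb R a) d mV c0 (@bb0 R a a0 a1) d1).
apply: (@le_lt_trans _ _ K%:E); last exact: ltry.
apply: lime_le.
  by apply: is_cvg_nneseries => n _ _; apply: mule_ge0; [rewrite lee_fin | exact: measure_ge0].
apply: nearW => M.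
have -> : (\sum_(0 <= n < M) ((mm c d n)%:R%:E * Q (@Aev _ _ _ V (@bb R a) n)) =
   (\sum_(0 <= n < M) ((mm c d n)%:R * pr n))%:E)%E.
  by rewrite -sumEFin; apply: eq_bigr => n _; rewrite QA.
rewrite lee_fin.
have f0 n : 0 <= (mm c d n)%:R * pr n by rewrite mulr_ge0.
apply: (le_trans (@psum_mono R _ M (maxn M N0) f0 (leq_maxl M N0))).
rewrite (big_cat_nat (n := N0)) ?leq_maxr//=.
apply: lerD; last exact: hb.
apply: ler_sum => n _; rewrite ler_piMr//.
Qed.
End backward.

Theorem lemma2p2 (dsp : measure_display) (T : measurableType dsp) (R : realType)
  (Q : probability T R) (d : nat) (c a : R)
  (V : T -> R) (W : nat -> nat -> T -> R) :
  (1 <= d)%N -> 0 < c -> 0 < a -> a < 1 ->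
  measurable_fun setT V -> (forall i n, measurable_fun setT (W i n)) ->
  mutually_independent Q (fam V W) ->
  (forall i n, identically_distributed Q (W i n) V) ->
  {ae Q, forall x, 0 <= V x} ->
  (forall i n, {ae Q, forall x, 0 <= W i n x}) ->
  ((\int[Q]_x ((logp (V x)) ^+ d)%:E < +oo)%E <->
   {ae Q, forall x,
     (\sum_(0 <= n <oo)
        (a ^+ n * \sum_(0 <= i < (Num.truncn (c * n%:R ^+ (d - 1))).+1) W i n x)%:E
      < +oo)%E}).
Proof.
move=> d1 c0 a0 a1 mV mW hind idd _ hW; split => [hI | hS].
  exact: (@forward dsp T R Q d c a V W d1 c0 a0 a1 mV mW idd hI hW).
exact: (@backward dsp T R Q d c a V W d1 c0 a0 a1 mV mW idd hind hW hS).
Qed.
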